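(* Let $v_1,v_2\in\Sigma^*$ (not necessarily distinct), let $u_1$ be a $v_1$-minimal word and $u_2$ a $v_2$-minimal word, and suppose $\mathrm{supp}(u_1)\neq\mathrm{supp}(u_2)$. Then $\mathrm{supp}(u_1)\cap\mathrm{supp}(u_2)=\emptyset$.
   Context: Let $\mathcal{A}=\langle Q,\Sigma,\delta\rangle$ be a synchronizing automaton with $n$ states $q_1,\dots,q_n$. Each word acts linearly on $\mathbb{C}Q$ by $q\mapsto q\cdot u$, preserving $w^\perp=\{x:\langle x,q_1+\dots+q_n\rangle=0\}$; let $\rho:\Sigma^*\to\mathbb{M}_{n-1}(\mathbb{C})$ be the induced representation and $\mathcal{R}$ the $\mathbb{C}$-algebra generated by $\rho(\Sigma^* )$. Write $\mathcal{R}/\mathrm{Rad}(\mathcal{R})\cong\prod_{i=1}^k\mathbb{M}_{n_i}(\mathbb{C})$ (Jacobson radical, Wedderburn–Artin) and let $\theta_i:\Sigma^*\to\mathbb{M}_{n_i}(\mathbb{C})$ be $\rho$ followed by the quotient map and the $i$-th projection; $0_i$ is the zero matrix. The support of a word $z$ is $\mathrm{supp}(z)=\{i:\theta_i(z)\neq0_i\}$. For $v\in\Sigma^*$, a word $u\in\Sigma^*v\Sigma^*$ is $v$-minimal, and $\mathrm{supp}(u)$ is a ($v$-)minimal section, if $\mathrm{supp}(u)\neq\emptyset$ and there is no $z\in\Sigma^*v\Sigma^*$ with $\emptyset\neq\mathrm{supp}(z)\subsetneq\mathrm{supp}(u)$. *)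

(* Defs.v *)
From HB Require Import structures.
From mathcomp Require Import all_boot all_order all_algebra.
Set Implicit Arguments. Unset Strict Implicit. Unset Printing Implicit Defensive.
Import GRing.Theory Num.Theory.
Local Open Scope ring_scope.

(* Automaton with m.+1 states 'I_m.+1 (q_1..q_n with n = m+1), alphabet Sigma,
   transition function delta.  Words are seq Sigma. *)

Section Auto.
Variables (F : numClosedFieldType) (m : nat) (Sigma : finType)
          (delta : 'I_m.+1 -> Sigma -> 'I_m.+1).

Definition act (q : 'I_m.+1) (u : seq Sigma) : 'I_m.+1 := foldl delta q u.

Definition synchronizing : Prop :=
  exists w : seq Sigma, forall p q : 'I_m.+1, act p w = act q w.

(* The induced representation on w^perp = {x | sum of coordinates = 0},
   written in the basis b_i = q_i - q_n (i < m), acting on row vectors: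
   b_i . u = q_{i.u} - q_{n.u}, whose coordinate on b_j is
   [i.u = j] - [n.u = j]. *)
Definition rho (u : seq Sigma) : 'M[F]_m :=
  \matrix_(i < m, j < m)
    ((widen_ord (leqnSn m) j == act (widen_ord (leqnSn m) i) u)%:R
     - (widen_ord (leqnSn m) j == act ord_max u)%:R).

(* R = the F-algebra generated by rho(Sigma^* ): the smallest set of matrices
   containing 1 and every rho u, closed under +, scaling and product. *)
Definition inR (A : 'M[F]_m) : Prop :=
  forall S : 'M[F]_m -> Prop,
    S 1%:M ->
    (forall u, S (rho u)) ->
    (forall B C, S B -> S C -> S (B + C)) ->
    (forall (a : F) B, S B -> S (a *: B)) ->
    (forall B C, S B -> S C -> S (B *m C)) ->
    S A.

Definition inRad (A : 'M[F]_m) : Prop :=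
  inR A /\ forall B, inR B ->
    exists C, inR C /\ C *m (1%:M - B *m A) = 1%:M /\ (1%:M - B *m A) *m C = 1%:M.

(* theta : a Wedderburn--Artin decomposition  R / Rad(R) ~= prod_i M_{ns i}(F):
   theta i is rho followed by the quotient map and the i-th projection. *)
Definition wedderburn (k : nat) (ns : 'I_k -> nat)
    (theta : forall i : 'I_k, 'M[F]_m -> 'M[F]_(ns i)) : Prop :=
  (forall i, (0 < ns i)%N) /\
  (forall i, theta i 1%:M = 1%:M) /\
  (forall i A B, inR A -> inR B -> theta i (A + B) = theta i A + theta i B) /\
  (forall i (a : F) A, inR A -> theta i (a *: A) = a *: theta i A) /\
  (forall i A B, inR A -> inR B -> theta i (A *m B) = theta i A *m theta i B) /\
  (forall Bs : forall i : 'I_k, 'M[F]_(ns i),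
      exists A, inR A /\ forall i, theta i A = Bs i) /\
  (forall A, inR A -> (inRad A <-> forall i, theta i A = 0)).

Definition supp (k : nat) (ns : 'I_k -> nat)
    (theta : forall i : 'I_k, 'M[F]_m -> 'M[F]_(ns i)) (z : seq Sigma) : {set 'I_k} :=
  [set i : 'I_k | theta i (rho z) != 0].

Definition contains_factor (v u : seq Sigma) : Prop :=
  exists x y : seq Sigma, u = x ++ v ++ y.

Definition v_minimal (k : nat) (ns : 'I_k -> nat)
    (theta : forall i : 'I_k, 'M[F]_m -> 'M[F]_(ns i)) (v u : seq Sigma) : Prop :=
  [/\ contains_factor v u,
      supp theta u != set0
    & ~ exists z, contains_factor v z /\ supp theta z != set0 /\
                  supp theta z \proper supp theta u].

End Auto.

(* Main.v *)
Require Import Defs.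
From mathcomp Require Import all_boot all_order all_algebra.
Set Implicit Arguments. Unset Strict Implicit. Unset Printing Implicit Defensive.
Import GRing.Theory Num.Theory.
Local Open Scope ring_scope.

Section Helpers.
Variables (F : numClosedFieldType) (m : nat) (Sigma : finType)
          (delta : 'I_m.+1 -> Sigma -> 'I_m.+1).

Lemma sum_pick n (f : 'I_n -> F) a : \sum_p (p == a)%:R * f p = f a.
Proof.
rewrite (bigD1 a) //= eqxx mul1r big1 ?addr0 // => p /negbTE ->; by rewrite mul0r.
Qed.

Lemma rho_cat (u v : seq Sigma) :
  rho F delta (u ++ v) = rho F delta u *m rho F delta v.
Proof.
apply/matrixP => i j; rewrite !mxE.
set f := fun p : 'I_m.+1 => ((widen_ord (leqnSn m) j == act delta p v)%:R
   - (widen_ord (leqnSn m) j == act delta ord_max v)%:R : F).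
have fmax : f ord_max = 0 by rewrite /f subrr.
transitivity (\sum_(p < m.+1) (((p == act delta (widen_ord (leqnSn m) i) u)%:R
   - (p == act delta ord_max u)%:R) * f p)).
  rewrite (eq_bigr (fun p => (p == act delta (widen_ord (leqnSn m) i) u)%:R * f p
     - (p == act delta ord_max u)%:R * f p)); last by move=> p _; rewrite mulrBl.
  rewrite sumrB !sum_pick /f /act !foldl_cat.
  by rewrite opprB addrA subrK.
rewrite big_ord_recr /= fmax mulr0 addr0; apply: eq_bigr => l _.
by rewrite !mxE.
Qed.

Lemma rho_nil : rho F delta [::] = 1%:M.
Proof.
apply/matrixP => i j; rewrite !mxE /act /=.
have -> : (widen_ord (leqnSn m) j == ord_max) = false.
  by apply/negbTE; rewrite -val_eqE /= neq_ltn ltn_ord.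
have -> : (widen_ord (leqnSn m) j == widen_ord (leqnSn m) i) = (i == j).
  by rewrite -val_eqE /= eq_sym.
by rewrite subr0.
Qed.

Lemma inR_rho u : inR delta (rho F delta u). Proof. by move=> S ? h ???; apply: h. Qed.
Lemma inR_1 : inR delta (1%:M : 'M[F]_m). Proof. by move=> S h ????. Qed.
Lemma inR_add A B : inR delta A -> inR delta B -> inR delta (A + B :'M[F]_m).
Proof. move=> hA hB S h1 h2 h3 h4 h5; exact: (h3 _ _ (hA S h1 h2 h3 h4 h5) (hB S h1 h2 h3 h4 h5)). Qed.
Lemma inR_scale a A : inR delta A -> inR delta (a *: A :'M[F]_m).
Proof. move=> hA S h1 h2 h3 h4 h5; exact: (h4 _ _ (hA S h1 h2 h3 h4 h5)). Qed.
Lemma inR_mul A B : inR delta A -> inR delta B -> inR delta (A *m B :'M[F]_m).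
Proof. move=> hA hB S h1 h2 h3 h4 h5; exact: (h5 _ _ (hA S h1 h2 h3 h4 h5) (hB S h1 h2 h3 h4 h5)). Qed.

Variables (n : nat) (th : 'M[F]_m -> 'M[F]_n).
Hypothesis thadd : forall A B, inR delta A -> inR delta B -> th (A + B) = th A + th B.
Hypothesis thscale : forall (a : F) A, inR delta A -> th (a *: A) = a *: th A.
Hypothesis thmul : forall A B, inR delta A -> inR delta B -> th (A *m B) = th A *m th B.

Lemma key (P Q : 'M[F]_n) :
  (forall w, P *m th (rho F delta w) *m Q = 0) ->
  forall X, inR delta X -> P *m th X *m Q = 0.
Proof.
move=> hw.
pose V X := inR delta X /\ P *m th X *m Q = 0.
pose H Y := inR delta Y /\ forall w, V (rho F delta w *m Y).
pose M X := inR delta X /\ forall Y, H Y -> H (X *m Y).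
have VD A B : V A -> V B -> V (A + B).
  move=> [hA eA] [hB eB]; split; first exact: inR_add.
  by rewrite thadd // mulmxDr mulmxDl eA eB addr0.
have VZ a A : V A -> V (a *: A).
  move=> [hA eA]; split; first exact: inR_scale.
  by rewrite thscale // -scalemxAr -scalemxAl eA scaler0.
move=> X hX.
have : M X.
  apply: (hX M).
  - split; first exact: inR_1.
    by move=> Y hY; rewrite mul1mx.
  - move=> u; split; first exact: inR_rho.
    move=> Y [hY eY]; split; first by apply: inR_mul => //; exact: inR_rho.
    by move=> w; rewrite mulmxA -rho_cat; apply: eY.
  - move=> B C [hB eB] [hC eC]; split; first exact: inR_add.
    move=> Y hY; have [h1 e1] := eB Y hY; have [h2 e2] := eC Y hY.
    split; first by rewrite mulmxDl; exact: inR_add.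
    by move=> w; rewrite mulmxDl mulmxDr; apply: VD.
  - move=> a B [hB eB]; split; first exact: inR_scale.
    move=> Y hY; have [h1 e1] := eB Y hY.
    split; first by rewrite -scalemxAl; exact: inR_scale.
    by move=> w; rewrite -scalemxAl -scalemxAr; apply: VZ.
  - move=> B C [hB eB] [hC eC]; split; first exact: inR_mul.
    by move=> Y hY; rewrite -mulmxA; apply: eB; apply: eC.
move=> [_ hM].
have H1 : H 1%:M.
  split; first exact: inR_1.
  move=> w; rewrite mulmx1; split; [exact: inR_rho | exact: hw].
have [_ e] := hM _ H1.
have [_ e'] := e [::].
by move: e'; rewrite rho_nil mul1mx mulmx1.
Qed.

End Helpers.

From Stdlib Require Import Classical.

Theorem mainTheorem7 (F : numClosedFieldType) (m : nat) (Sigma : finType)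
    (delta : 'I_m.+1 -> Sigma -> 'I_m.+1)
    (Hsync : synchronizing delta)
    (k : nat) (ns : 'I_k -> nat)
    (theta : forall i : 'I_k, 'M[F]_m -> 'M[F]_(ns i))
    (Hwed : wedderburn delta theta)
    (v1 v2 u1 u2 : seq Sigma)
    (Hu1 : v_minimal delta theta v1 u1)
    (Hu2 : v_minimal delta theta v2 u2)
    (Hneq : supp delta theta u1 != supp delta theta u2) :
  supp delta theta u1 :&: supp delta theta u2 = set0.
Proof.
move: Hwed => [Hpos [H1 [Hadd [Hscale [Hmul [Hsurj Hker]]]]]].
case: Hu1 => cf1 ne1 min1; case: Hu2 => cf2 ne2 min2.
apply/eqP; apply: contraNT Hneq => /set0Pn [i /setIP [i1 i2]].
have thz j w : theta j (rho F delta (u1 ++ w ++ u2)) =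
    theta j (rho F delta u1) *m theta j (rho F delta w) *m theta j (rho F delta u2).
  rewrite !rho_cat Hmul; [|exact: inR_rho|by apply: inR_mul; exact: inR_rho].
  by rewrite Hmul ?mulmxA //; exact: inR_rho.
have supp_sub w : supp delta theta (u1 ++ w ++ u2) \subset
    supp delta theta u1 :&: supp delta theta u2.
  apply/subsetP => j; rewrite !inE thz => h; apply/andP; split;
    by apply: contraNneq h => ->; rewrite ?mul0mx ?mulmx0.
have [w hw] : exists w, theta i (rho F delta (u1 ++ w ++ u2)) != 0.
  case: (classic (exists w, theta i (rho F delta (u1 ++ w ++ u2)) != 0)) => // hno.
  exfalso.
  set A := theta i (rho F delta u1); set B := theta i (rho F delta u2).
  have hw0 : forall w, A *m theta i (rho F delta w) *m B = 0.
    move=> w; apply/eqP; apply/negPn/negP => h; apply: hno; exists w.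
    by rewrite thz.
  have hkey := key (Hadd i) (Hscale i) hw0.
  rewrite inE in i1; rewrite inE in i2.
  case/matrix0Pn: i1 => r [c hrc].
  case/matrix0Pn: i2 => r' [c' hrc'].
  pose Bs := fun j => (\matrix_(a, b) ((nat_of_ord a == nat_of_ord c)
        && (nat_of_ord b == nat_of_ord r'))%:R : 'M[F]_(ns j)).
  have [X [hX hXi]] := Hsurj Bs.
  have := hkey X hX; rewrite hXi => /matrixP/(_ r c').
  have hAD b : (A *m Bs i) r b = A r c * (b == r')%:R.
    rewrite mxE (bigD1 c) //= big1 ?addr0; first by rewrite mxE eqxx.
    by move=> a /negbTE hac; rewrite mxE val_eqE hac mulr0.
  rewrite mxE (bigD1 r') //= big1 ?addr0.
    rewrite hAD eqxx mulr1 mxE => /eqP; apply/negP; exact: mulf_neq0.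
  by move=> b /negbTE hb; rewrite hAD hb mulr0 mul0r.
have sz : supp delta theta (u1 ++ w ++ u2) != set0.
  by apply/set0Pn; exists i; rewrite inE.
have [sz1 sz2] : supp delta theta (u1 ++ w ++ u2) \subset supp delta theta u1 /\
    supp delta theta (u1 ++ w ++ u2) \subset supp delta theta u2.
  by split; apply: subset_trans (supp_sub w) _; [apply: subsetIl | apply: subsetIr].
have e1 : supp delta theta (u1 ++ w ++ u2) == supp delta theta u1.
  rewrite eqEproper sz1 /=; apply/negP => hp; apply: min1.
  exists (u1 ++ w ++ u2); split; last by split.
  case: cf1 => x [y ->]; exists x, (y ++ w ++ u2); by rewrite -!catA.
have e2 : supp delta theta (u1 ++ w ++ u2) == supp delta theta u2.
  rewrite eqEproper sz2 /=; apply/negP => hp; apply: min2.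
  exists (u1 ++ w ++ u2); split; last by split.
  case: cf2 => x [y ->]; exists (u1 ++ w ++ x), y; by rewrite -!catA.
by rewrite -(eqP e1) -(eqP e2).
Qed.
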